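(* Let $(g(x))_{x\ge0}$ be a semigroup acting on a real finite-dimensional vector space $V$, let $V=\bigoplus_{i=1}^nV_i$ be an SRPD, and suppose that for some component $V_i$ and some $x_0>0$ the map $g(x_0)|_{V_i}$ has eigenvalue $0$. Then $g(x)|_{V_i}$ has $0$ as its only eigenvalue for every $x>0$, and $V_i\subseteq\ker g(x)$ for all $x>0$.
   Context: A semigroup is a map $g:[0,\infty)\to L(V)$ with $g(0)=\mathrm{id}$ and $g(x+y)=g(x)g(y)$ for all $x,y\ge0$. A simultaneous real primary decomposition (SRPD) is a decomposition $V=\bigoplus_{i=1}^nV_i$ into nonzero subspaces, each $g(x)$-invariant for all $x\ge0$, such that each $V_i$ is either of first type: for every $x\ge0$, $g(x)|_{V_i}$ has exactly one (complex) eigenvalue $\lambda(x)$, which is real and $\ge0$; or of second type: for every $x\ge 0$ the eigenvalues of $g(x)|_{V_i}$ lie in $\{\lambda(x),\overline{\lambda(x)}\}$ for some $\lambda(x)\in\mathbb C$, with $\lambda(x)\notin\mathbb R$ for some $x$. *)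

(* Defs.v *)
From HB Require Import structures.
From mathcomp Require Import all_boot all_order all_algebra.
From mathcomp Require Import complex.
From mathcomp Require Import reals.
Set Implicit Arguments. Unset Strict Implicit. Unset Printing Implicit Defensive.
Import Order.TTheory GRing.Theory Num.Theory.
Local Open Scope ring_scope.
Local Open Scope complex_scope.

(* Conventions: V = 'rV[R]_d (row vectors), a linear map is a matrix A acting
   on the right, v |-> v *m A.  Subspaces are row spaces of matrices (mxalgebra).
   Composition "f o h" corresponds to H *m F. *)

(* Matrix of the restriction of A to the (A-invariant) row space of W,
   in the basis row_base W. *)
Definition restr_mx (R : fieldType) (d : nat) (W A : 'M[R]_d) : 'M[R]_(\rank W) :=
  row_base W *m A *m pinvmx (row_base W).

Definition restr_eig (R : rcfType) (d : nat) (W A : 'M[R]_d) (mu : R[i]) : bool :=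
  eigenvalue (map_mx (real_complex R) (restr_mx W A)) mu.

(* g : [0,oo) -> L(V) is a semigroup (values at x < 0 are irrelevant). *)
Definition semigroup (R : realType) (d : nat) (g : R -> 'M[R]_d) : Prop :=
  g 0 = 1%:M /\
  forall x y : R, 0 <= x -> 0 <= y -> g (x + y) = g y *m g x.
  (* g(x+y) = g(x) o g(y) in the row-vector convention *)

Definition first_type (R : realType) (d : nat) (g : R -> 'M[R]_d) (W : 'M[R]_d) : Prop :=
  forall x : R, 0 <= x ->
    exists2 l : R, 0 <= l & forall mu : R[i], restr_eig W (g x) mu <-> mu = l%:C.

Definition second_type (R : realType) (d : nat) (g : R -> 'M[R]_d) (W : 'M[R]_d) : Prop :=
  exists lam : R -> R[i],
    (forall x : R, 0 <= x -> forall mu : R[i],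
        restr_eig W (g x) mu -> mu = lam x \/ mu = conjc (lam x)) /\
    (exists2 x : R, 0 <= x & 'Im (lam x) != 0).

Definition SRPD (R : realType) (d n : nat) (g : R -> 'M[R]_d) (V_ : 'I_n -> 'M[R]_d) : Prop :=
  (\sum_(i < n) V_ i :=: 1%:M)%MS /\
  mxdirect (\sum_(i < n) V_ i) /\
  (forall i, V_ i != 0) /\
  (forall i x, 0 <= x -> stablemx (V_ i) (g x)) /\
  (forall i, first_type g (V_ i) \/ second_type g (V_ i)).

(* Main.v *)
Require Import Defs.
From HB Require Import structures.
From mathcomp Require Import all_boot all_order all_algebra.
From mathcomp Require Import complex.
From mathcomp Require Import reals.
Import Order.TTheory GRing.Theory Num.Theory.
Local Open Scope ring_scope.
Local Open Scope complex_scope.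
Lemma prodX0 (F : fieldType) (r : seq F) : (forall z, z \in r -> z = 0) ->
  \prod_(z <- r) ('X - z%:P) = 'X ^+ size r.
Proof.
elim: r => [|z r IH] r0; first by rewrite big_nil expr0.
rewrite big_cons IH; last by move=> y yr; apply: r0; rewrite inE yr orbT.
by rewrite (r0 z) ?mem_head // subr0 exprS.
Qed.

Lemma nilp (R : rcfType) (n : nat) (M : 'M[R]_n.+1) :
  (forall mu, eigenvalue (map_mx (real_complex R) M) mu -> mu = 0) ->
  M ^+ n.+1 = 0.
Proof.
move=> H.
set N := map_mx (real_complex R) M.
have [r Hr] := closed_field_poly_normal (char_poly N).
rewrite (monicP (char_poly_monic N)) scale1r in Hr.
have r0 : forall z, z \in r -> z = 0.
  move=> z zr; apply: H; rewrite eigenvalue_root_char Hr root_prod_XsubC //.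
have sr : size r = n.+1.
  have := size_char_poly N; rewrite Hr size_prod_XsubC; by case.
have Hp : char_poly N = 'X ^+ n.+1.
  by rewrite Hr prodX0 // sr.
have CH := Cayley_Hamilton N.
rewrite Hp rmorphXn /= horner_mx_X in CH.
apply: (@map_mx_inj _ _ (real_complex R)).
have mX : forall k, map_mx (real_complex R) (M ^+ k) = N ^+ k.
  elim=> [|k IHk]; first by rewrite !expr0 map_mx1.
  by rewrite !exprS -IHk map_mxM.
by rewrite mX CH map_mx0.
Qed.

Lemma restrM (R : fieldType) d (W A B : 'M[R]_d) : stablemx W A ->
  restr_mx W (A *m B) = restr_mx W A *m restr_mx W B.
Proof.
move=> sA.
have K : row_base W *m A *m pinvmx (row_base W) *m row_base W = row_base W *m A.
  apply: mulmxKpV.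
  by rewrite (eqmxMr _ (eq_row_base W)) eq_row_base.
rewrite /restr_mx (mulmxA (_ *m _ *m pinvmx _)) (mulmxA _ (row_base W)) K.
by rewrite !(mulmxA (row_base W)).
Qed.

Lemma restrX (R : fieldType) d (W A : 'M[R]_d) k : stablemx W A ->
  restr_mx W (A ^+ k.+1) = restr_mx W A ^+ k.+1.
Proof.
move=> sA; elim: k => [|k IH]; first by rewrite !expr1.
by rewrite exprS -mulmxE restrM // IH mulmxE -exprS.
Qed.

Lemma eig0 (R : rcfType) d (W A : 'M[R]_d) :
  restr_eig W A 0 = (\det (restr_mx W A) == 0).
Proof.
rewrite /restr_eig eigenvalue_root_char /root horner_coef0 char_poly_det.
by rewrite det_map_mx mulf_eq0 signr_eq0 /= fmorph_eq0.
Qed.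

Lemma nilp0 (R : rcfType) (n : nat) (M : 'M[R]_n) :
  (forall mu, eigenvalue (map_mx (real_complex R) M) mu -> mu = 0) ->
  M ^+ n = 0.
Proof. case: n M => [|n] M H; first by rewrite flatmx0. exact: nilp. Qed.

Lemma gpow (R : realType) d (g : R -> 'M[R]_d) x : semigroup g -> 0 <= x ->
  forall k : nat, g (k%:R * x) = g x ^+ k.
Proof.
move=> [g0 gM] x0; elim=> [|k IH]; first by rewrite mul0r g0 expr0.
have hk : 0 <= k%:R * x by rewrite mulr_ge0.
by rewrite -addn1 natrD mulrDl mul1r gM // IH addn1 exprS mulmxE.
Qed.

Arguments gpow {R d g x}.

Lemma detX (R : comUnitRingType) m (M : 'M[R]_m) k : \det (M ^+ k) = \det M ^+ k.
Proof.
elim: k => [|k IH]; first by rewrite !expr0 det1.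
by rewrite !exprS -mulmxE det_mulmx IH.
Qed.

Theorem mainTheorem4 (R : realType) (d n : nat) (g : R -> 'M[R]_d)
    (V_ : 'I_n -> 'M[R]_d) (i : 'I_n) (x0 : R) :
  semigroup g -> SRPD g V_ -> 0 < x0 -> restr_eig (V_ i) (g x0) 0 ->
  forall x : R, 0 < x ->
    (forall mu : R[i], restr_eig (V_ i) (g x) mu <-> mu = 0) /\
    V_ i *m g x = 0.
Proof.
move=> sg [_ [_ [_ [stab types]]]] x0pos e0 x xpos.
have gM := sg.2.
set W := V_ i.
have st : forall y, 0 <= y -> stablemx W (g y) := fun y hy => stab i y hy.
have F0 : forall y, 0 <= y -> restr_eig W (g y) 0 ->
    forall mu, restr_eig W (g y) mu -> mu = 0.
  move=> y hy e mu emu; case: (types i) => [ft|[lam [Hl _]]].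
    have [l _ Hl] := ft y hy.
    by rewrite (Hl mu).1 // -((Hl 0).1 e).
  have lam0 : lam y = 0.
    case: (Hl y hy 0 e) => h; first by rewrite -h.
    by have := congr1 conjc h; rewrite conjcK => <-; rewrite rmorph0.
  by case: (Hl y hy mu emu) => ->; rewrite lam0 ?rmorph0.
have det0 : forall y, 0 < y -> \det (restr_mx W (g y)) = 0.
  move=> y hy.
  have [k hk] : exists k : nat, x0 < k.+1%:R * y.
    exists (Num.Def.archi_bound (x0 / y)).
    have := archi_boundP (divr_ge0 (ltW x0pos) (ltW hy)).
    rewrite ltr_pdivrMr // => h; apply: (lt_le_trans h).
    apply: ler_wpM2r; rewrite ?ltW // ?ler_nat ?ltr_nat //.
  have hpos : 0 < k.+1%:R * y - x0 by rewrite subr_gt0.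
  have := gM x0 (k.+1%:R * y - x0) (ltW x0pos) (ltW hpos).
  rewrite addrC subrK (gpow sg (ltW hy)) => e1.
  have := congr1 (fun M => \det (restr_mx W M)) e1.
  rewrite /= restrM ?st ?subr_ge0 ?ltW // det_mulmx.
  rewrite restrX ?st ?ltW // detX.
  move: e0; rewrite eig0 => /eqP ->; rewrite mulr0 => /eqP.
  by rewrite expf_eq0 => /andP [_ /eqP].
have all0 : forall y, 0 < y -> forall mu, restr_eig W (g y) mu <-> mu = 0.
  move=> y hy mu; split => [emu | ->].
    by apply: F0 (ltW hy) _ mu emu; rewrite eig0 det0.
  by rewrite eig0 det0.
split; first exact: all0.
case: (eqVneq (\rank W) 0%N) => [r0|rpos].
  have -> : W = 0 by apply/eqP; rewrite -mxrank_eq0 r0.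
  by rewrite mul0mx.
have [m Hm] : exists m, \rank W = m.+1.
  by case: (\rank W) rpos => // m _; exists m.
set y := x / (\rank W)%:R.
have hy : 0 < y by rewrite divr_gt0 // ltr0n lt0n.
have ex : x = (\rank W)%:R * y by rewrite /y mulrC divfK // pnatr_eq0.
have Rx : restr_mx W (g x) = 0.
  have -> : g x = g y ^+ m.+1 by rewrite {1}ex (gpow sg (ltW hy)) Hm.
  rewrite restrX ?st ?ltW // -[m.+1]Hm.
  apply: nilp0 => mu; exact: (all0 y hy mu).1.
have sub : (row_base W *m g x <= row_base W)%MS.
  by rewrite (eqmxMr _ (eq_row_base W)) eq_row_base st // ltW.
have K : row_base W *m g x = 0.
  by rewrite -(mulmxKpV sub); move: Rx; rewrite /restr_mx => ->; rewrite mul0mx.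
have WK : W *m pinvmx (row_base W) *m row_base W = W.
  by apply: mulmxKpV; rewrite eq_row_base.
by rewrite -WK -mulmxA K mulmx0.
Qed.
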